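(* Let $X,Y$ be Hausdorff spaces with continuous $k$-means $\mu$ on $X$ and $\nu$ on $Y$, and let $g:X\to Y$ be a continuous $k$-mean homomorphism. (i) If $\mu$ and $\nu$ $\beta$-extend to $(k+1)$-means $\tilde\mu$ and $\tilde\nu$ respectively, then $g$ is a $(k+1)$-mean homomorphism from $(X,\tilde\mu)$ to $(Y,\tilde\nu)$. (ii) If $g$ is surjective and $\mu$ $\beta$-extends to a $(k+1)$-mean $\tilde\mu$, then $\nu$ $\beta$-extends to a $(k+1)$-mean $\tilde\nu$, and $g$ is then a $(k+1)$-mean homomorphism from $(X,\tilde\mu)$ to $(Y,\tilde\nu)$.
   Context: A $k$-mean is a map $\mu:X^k\to X$ with $\mu(x,\ldots,x)=x$. A map $g:X\to Y$ is a $k$-mean homomorphism from $(X,\mu)$ to $(Y,\nu)$ if $g\circ\mu=\nu\circ g_k$, where $g_k(x_1,\ldots,x_k)=(g(x_1),\ldots,g(x_k))$. Barycentric operator of a $k$-mean $\mu$: $\beta_\mu(\mathbf{x})_j=\mu(x_1,\ldots,\widehat{x_j},\ldots,x_{k+1})$ on $X^{k+1}$; a $(k+1)$-mean $\tilde\mu$ is a $\beta$-extension of $\mu$ if $\beta_\mu^n(\mathbf{x})\to(\tilde\mu(\mathbf{x}),\ldots,\tilde\mu(\mathbf{x}))$ for every $\mathbf{x}\in X^{k+1}$. *)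

(* Defs.v *)
From HB Require Import structures.
From mathcomp Require Import all_boot all_order all_algebra.
From mathcomp Require Import all_classical all_reals all_analysis.
Set Implicit Arguments. Unset Strict Implicit. Unset Printing Implicit Defensive.
Local Open Scope classical_set_scope.

(* X^k is represented as functions 'I_k -> X; with the product topology
   it is the type {ptws 'I_k -> X}. *)

Definition is_kmean (X : Type) (k : nat) (mu : ('I_k -> X) -> X) : Prop :=
  forall x : X, mu (fun _ => x) = x.

Definition continuous_kmean (X : topologicalType) (k : nat)
  (mu : ('I_k -> X) -> X) : Prop :=
  continuous (mu : {ptws 'I_k -> X} -> X).

Definition kmean_hom (X Y : Type) (k : nat) (g : X -> Y)
  (mu : ('I_k -> X) -> X) (nu : ('I_k -> Y) -> Y) : Prop :=
  forall xs : 'I_k -> X, g (mu xs) = nu (fun i => g (xs i)).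

(* barycentric operator: beta_mu(x)_j = mu(x_1,..,x_j omitted,..,x_{k+1}) *)
Definition barycentric (X : Type) (k : nat) (mu : ('I_k -> X) -> X)
  (xs : 'I_k.+1 -> X) : 'I_k.+1 -> X :=
  fun j => mu (fun i : 'I_k => xs (lift j i)).

Definition beta_extension (X : topologicalType) (k : nat)
  (mu : ('I_k -> X) -> X) (mut : ('I_k.+1 -> X) -> X) : Prop :=
  is_kmean mut /\
  forall xs : 'I_k.+1 -> X,
    (fun n : nat => (iter n (barycentric mu) xs : {ptws 'I_k.+1 -> X}))
      @ \oo --> ((fun _ : 'I_k.+1 => mut xs) : {ptws 'I_k.+1 -> X}).

(* Main.v *)
Require Import Defs.
From HB Require Import structures.
From mathcomp Require Import all_boot all_order all_algebra.
From mathcomp Require Import all_classical all_reals all_analysis.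
Local Open Scope classical_set_scope.


Lemma ptws_cvgP {I : eqType} {V : topologicalType} (F : set_system (I -> V)) {FF: Filter F} (f : I -> V) :
  (F --> (f : {ptws I -> V})) <-> forall i, (fun h => h i) @ F --> f i.
Proof.
split.
  move=> Ff i; apply: cvg_trans; last exact: (@proj_continuous I (fun _ => V) i f).
  by apply: cvg_app; exact: Ff.
move=> H.
have := @cvg_sup (I -> V) _ (fun i => Topological.class (initial_topology (fun f : I -> V => f i))) F f FF.
move=> [_ ]; apply => i.
apply/cvg_image => //.
  by rewrite eqEsubset; split => y // _; exists (fun _ => y).
move=> B /H /= FB; exists ((fun h => h i) @^-1` B) => //.
by rewrite image_preimage //; rewrite eqEsubset; split => y // _; exists (fun _ => y).
Qed.

Lemma iter_bary_comm (X Y : Type) (k : nat) (mu : ('I_k -> X) -> X)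
  (nu : ('I_k -> Y) -> Y) (g : X -> Y) (hg : kmean_hom g mu nu)
  (xs : 'I_k.+1 -> X) n :
  iter n (barycentric nu) (fun i => g (xs i)) =
  (fun i => g (iter n (barycentric mu) xs i)).
Proof.
elim: n => [//|n IH] /=; rewrite IH.
apply: funext => j; rewrite /barycentric hg //.
Qed.

Lemma coord_cvg (X : topologicalType) (k : nat) (u : nat -> 'I_k.+1 -> X) l :
  (fun n => (u n : {ptws 'I_k.+1 -> X})) @ \oo --> (l : {ptws 'I_k.+1 -> X}) ->
  forall i, (fun n => u n i) @ \oo --> l i.
Proof. by move/ptws_cvgP. Qed.
Arguments coord_cvg {X k u l}.

Theorem proposition7p2 (X Y : topologicalType) (k : nat)
  (hX : hausdorff_space X) (hY : hausdorff_space Y)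
  (mu : ('I_k -> X) -> X) (nu : ('I_k -> Y) -> Y) (g : X -> Y)
  (hmu : is_kmean mu) (hnu : is_kmean nu)
  (cmu : continuous_kmean mu) (cnu : continuous_kmean nu)
  (cg : continuous g) (hg : kmean_hom g mu nu) :
  (forall (mut : ('I_k.+1 -> X) -> X) (nut : ('I_k.+1 -> Y) -> Y),
      beta_extension mu mut -> beta_extension nu nut ->
      kmean_hom g mut nut) /\
  ((forall y : Y, exists x : X, g x = y) ->
   forall mut : ('I_k.+1 -> X) -> X,
     beta_extension mu mut ->
     exists nut : ('I_k.+1 -> Y) -> Y,
       beta_extension nu nut /\ kmean_hom g mut nut).
Proof.
have partI : forall (mut : ('I_k.+1 -> X) -> X) (nut : ('I_k.+1 -> Y) -> Y),
      beta_extension mu mut -> beta_extension nu nut ->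
      kmean_hom g mut nut.
  move=> mut nut [_ bm] [_ bn] xs.
  have Ha := coord_cvg (bm xs) ord0.
  have Hb := coord_cvg (bn (fun i => g (xs i))) ord0.
  have Hc : (fun n => g (iter n (barycentric mu) xs ord0)) @ \oo --> g (mut xs).
    exact: (cvg_trans (cvg_app g Ha) (cg _)).
  have E : (fun n => iter n (barycentric nu) (fun i => g (xs i)) ord0) =
           (fun n => g (iter n (barycentric mu) xs ord0)).
    by apply: funext => n; rewrite (iter_bary_comm _ _ _ _ _ _ hg).
  rewrite E in Hb.
  exact: (cvg_unique hY Hc Hb).
split => // gsurj mut bmut.
have [f hf] : exists f : Y -> X, forall y, g (f y) = y.
  exists (fun y => projT1 (cid (gsurj y))) => y; exact: (projT2 (cid (gsurj y))).
pose nut := fun ys : 'I_k.+1 -> Y => g (mut (fun i => f (ys i))).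
have bnut : beta_extension nu nut.
  split.
    move=> y; rewrite /nut; case: bmut => hm _.
    by rewrite (hm (f y)) hf.
  move=> ys; have Hys : ys = (fun i => g (f (ys i))) by apply: funext => i; rewrite hf.
  rewrite {1}Hys.
  have E : (fun n => iter n (barycentric nu) (fun i => g (f (ys i)))) =
           (fun n => (fun i => g (iter n (barycentric mu) (fun i => f (ys i)) i))).
    by apply: funext => n; rewrite (iter_bary_comm _ _ _ _ _ _ hg).
  rewrite E.
  apply/ptws_cvgP => i /=.
  have := coord_cvg (bmut.2 (fun i => f (ys i))) i => Ha.
  exact: (cvg_trans (cvg_app g Ha) (cg _)).
exists nut; split => //; exact: partI.
Qed.
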